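(* Assume (H1), (H2), fix $\lambda>f'(0)$, and let $s_*$ be a $\lambda$-conjugate point. Let $p(\cdot;\lambda)$, $q(\cdot;\lambda)$ be solutions of $q'=B(x,\lambda)q$ decaying as $x\to-\infty$ such that $p(s_*;\lambda),q(s_*;\lambda)$ form a basis of $\mathbb E^u_-(s_*,\lambda)$ and $p(s_*;\lambda)\in\ell_*^{sand}$. Then there is $\alpha\in\mathbb R$ such that $p(s_*;\lambda)=(0,\ p_2(s_*;\lambda),\ p_3(s_*;\lambda),\ 0)^T$ and $q(s_*;\lambda)=(\alpha p_2(s_*;\lambda),\ q_2(s_*;\lambda),\ q_3(s_*;\lambda),\ \alpha p_3(s_*;\lambda))^T$.
   Context: Fix real $\nu,\mu$ and $f(u)=\nu u^2-u^3-\mu u$. (H1): $\varphi$ is a smooth stationary solution of $u_t=-(1+\partial_x^2)^2u+f(u)$ with $\varphi\to0$ at $\pm\infty$. (H2): $f'(0)<0$. $B(x,\lambda)=\begin{pmatrix}0&0&0&1\\0&0&1&-2\\-\lambda-1+f'(\varphi(x))&0&0&0\\0&1&0&0\end{pmatrix}$. $\mathbb E^u_-(x,\lambda)$ is the set of values $q(x)$ of solutions of $q'=B(y,\lambda)q$ with $q(y)\to0$ as $y\to-\infty$; it is Lagrangian for $\omega(u,v)=\langle u,Jv\rangle$, $J=\begin{pmatrix}0&I_2\\-I_2&0\end{pmatrix}$. $\ell_*^{sand}=\{q\in\mathbb R^4:q_1=q_4=0\}$; $s$ is a $\lambda$-conjugate point if $\mathbb E^u_-(s,\lambda)\cap\ell_*^{sand}\neq\{0\}$.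 *)

(* Defs.v *)
From HB Require Import structures.
From mathcomp Require Import all_boot all_order all_algebra.
From mathcomp Require Import all_classical all_reals all_analysis.
Set Implicit Arguments. Unset Strict Implicit. Unset Printing Implicit Defensive.
Import Order.TTheory GRing.Theory Num.Theory.
Import numFieldNormedType.Exports.
Local Open Scope classical_set_scope.
Local Open Scope ring_scope.

Section Defs.
Variable R : realType.

Definition vec4 (a b c d : R) : 'cV[R]_4 :=
  \col_(i < 4) nth 0 [:: a; b; c; d] i.

(* 1-based coordinates q_1, ..., q_4 of a vector of R^4 *)
Definition c1 (v : 'cV[R]_4) : R := v (@inord 3 0) ord0.
Definition c2 (v : 'cV[R]_4) : R := v (@inord 3 1) ord0.
Definition c3 (v : 'cV[R]_4) : R := v (@inord 3 2) ord0.
Definition c4 (v : 'cV[R]_4) : R := v (@inord 3 3) ord0.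

Definition fnl (nu mu u : R) : R := nu * u ^+ 2 - u ^+ 3 - mu * u.
Definition fnl' (nu mu u : R) : R := 2 * nu * u - 3 * u ^+ 2 - mu.

(* (H1): phi smooth stationary solution of u_t = -(1+d_x^2)^2 u + f(u),
   i.e. -(phi + 2 phi'' + phi'''') + f(phi) = 0, with phi -> 0 at +-oo *)
Definition H1 (nu mu : R) (phi : R -> R) : Prop :=
  (forall (n : nat) (x : R), derivable (derive1n n phi) x 1) /\
  (forall x : R, - (phi x + 2 * derive1n 2 phi x + derive1n 4 phi x)
                 + fnl nu mu (phi x) = 0) /\
  (phi x @[x --> -oo] --> (0:R)) /\ (phi x @[x --> +oo] --> (0:R)).

Definition H2 (nu mu : R) : Prop := fnl' nu mu 0 < 0.

Definition Bmat (nu mu : R) (phi : R -> R) (lam x : R) : 'M[R]_4 :=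
  let a := - lam - 1 + fnl' nu mu (phi x) in
  \matrix_(i < 4, j < 4)
    nth 0 (nth [::] [:: [:: 0; 0; 0; 1];
                        [:: 0; 0; 1; -2];
                        [:: a; 0; 0; 0];
                        [:: 0; 1; 0; 0]] i) j.

Definition is_sol (nu mu : R) (phi : R -> R) (lam : R) (q : R -> 'cV[R]_4) : Prop :=
  forall x : R, is_derive x 1 q (Bmat nu mu phi lam x *m q x).

Definition decays_minus (q : R -> 'cV[R]_4) : Prop :=
  q y @[y --> -oo] --> (0 : 'cV[R]_4).

Definition Eu (nu mu : R) (phi : R -> R) (lam x : R) : set 'cV[R]_4 :=
  [set v | exists q : R -> 'cV[R]_4,
      is_sol nu mu phi lam q /\ decays_minus q /\ q x = v].

Definition lsand : set 'cV[R]_4 := [set v | c1 v = 0 /\ c4 v = 0].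

Definition conj_point (nu mu : R) (phi : R -> R) (lam s : R) : Prop :=
  exists v, Eu nu mu phi lam s v /\ lsand v /\ v <> 0.

Definition is_basis2 (E : set 'cV[R]_4) (u v : 'cV[R]_4) : Prop :=
  (forall a b : R, a *: u + b *: v = 0 -> a = 0 /\ b = 0) /\
  E = [set w | exists a b : R, w = a *: u + b *: v].

End Defs.

(* Main.v *)
Require Import Defs.
From HB Require Import structures.
From mathcomp Require Import all_boot all_order all_algebra.
From mathcomp Require Import all_classical all_reals all_analysis.
From mathcomp Require Import ring lra.
Import Order.TTheory GRing.Theory Num.Theory.
Import numFieldNormedType.Exports.
Local Open Scope classical_set_scope.
Local Open Scope ring_scope.

Lemma is_derive_coord (R : realType) (f : R -> 'cV[R]_4) (x : R) (df : 'cV[R]_4) (i : 'I_4) :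
  is_derive x (1:R) f df -> is_derive x (1:R) (fun t => f t i ord0) (df i ord0).
Proof.
move=> [d1 d2].
have hc : (fun h : R => h^-1 *: ((f \o shift x) (h *: 1) - f x)) @ 0^' --> df.
  by rewrite -d2; exact: d1.
have hg : (fun h : R => h^-1 *: (((fun t => f t i ord0) \o shift x) (h *: 1) - f x i ord0)) @ 0^' --> df i ord0.
  have -> : (fun h : R => h^-1 *: (((fun t => f t i ord0) \o shift x) (h *: 1) - f x i ord0)) =
     (fun M : 'cV[R]_4 => M i ord0) \o (fun h : R => h^-1 *: ((f \o shift x) (h *: 1) - f x)).
    by apply/funext => h; rewrite /= !mxE.
  exact: (continuous_cvg _ (@coord_continuous R 4 1 i ord0 df) hc).
split; first by apply/cvg_ex; exists (df i ord0).
exact: cvg_lim.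
Qed.

Lemma o0 : (ord0 : 'I_4) = inord 0. Proof. by apply/val_inj; rewrite /= inordK. Qed.
Lemma o1 : (lift ord0 ord0 : 'I_4) = inord 1. Proof. by apply/val_inj; rewrite /= inordK. Qed.
Lemma o2 : (lift ord0 (lift ord0 ord0) : 'I_4) = inord 2. Proof. by apply/val_inj; rewrite /= inordK. Qed.
Lemma o3 : (lift ord0 (lift ord0 (lift ord0 ord0)) : 'I_4) = inord 3. Proof. by apply/val_inj; rewrite /= inordK. Qed.

Section B.
Variables (R : realType) (nu mu : R) (phi : R -> R) (lam x : R) (v : 'cV[R]_4).
Let a := - lam - 1 + fnl' nu mu (phi x).
Ltac bt := rewrite /c1 /c2 /c3 /c4 !mxE !big_ord_recl big_ord0 !mxE /= o1 o2 o3 ?inordK //=; rewrite -?o0;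
  rewrite ?mul0r ?mul1r ?add0r ?addr0 ?mulN1r ?mulNr //.
Lemma B1 : (Bmat nu mu phi lam x *m v) (@inord 3 0) ord0 = c4 v.
Proof. bt. Qed.
Lemma B2 : (Bmat nu mu phi lam x *m v) (@inord 3 1) ord0 = c3 v - 2 * c4 v.
Proof. bt. Qed.
Lemma B3 : (Bmat nu mu phi lam x *m v) (@inord 3 2) ord0 = a * c1 v.
Proof. bt. Qed.
Lemma B4 : (Bmat nu mu phi lam x *m v) (@inord 3 3) ord0 = c2 v.
Proof. bt. Qed.
End B.

Definition Wf (R : realType) (p q : R -> 'cV[R]_4) (t : R) : R :=
  c1 (p t) * c3 (q t) + c2 (p t) * c4 (q t) - (c3 (p t) * c1 (q t) + c4 (p t) * c2 (q t)).

Arguments Wf {R}.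
Lemma Wf_cst (R : realType) (nu mu : R) (phi : R -> R) (lam : R) p q :
  is_sol nu mu phi lam p -> is_sol nu mu phi lam q -> forall x y, Wf p q x = Wf p q y.
Proof.
move=> Hp Hq x y; apply: is_derive_0_is_cst => t.
have hp1 := @is_derive_coord _ _ _ _ (inord 0) (Hp t).
have hp2 := @is_derive_coord _ _ _ _ (inord 1) (Hp t).
have hp3 := @is_derive_coord _ _ _ _ (inord 2) (Hp t).
have hp4 := @is_derive_coord _ _ _ _ (inord 3) (Hp t).
have hq1 := @is_derive_coord _ _ _ _ (inord 0) (Hq t).
have hq2 := @is_derive_coord _ _ _ _ (inord 1) (Hq t).
have hq3 := @is_derive_coord _ _ _ _ (inord 2) (Hq t).
have hq4 := @is_derive_coord _ _ _ _ (inord 3) (Hq t).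
rewrite ?B1 ?B2 ?B3 ?B4 in hp1 hp2 hp3 hp4 hq1 hq2 hq3 hq4.
have H := is_deriveB (is_deriveD (is_deriveM hp1 hq3) (is_deriveM hp2 hq4))
  (is_deriveD (is_deriveM hp3 hq1) (is_deriveM hp4 hq2)).
apply: is_derive_eq H _.
rewrite /GRing.scale /=. rewrite /c1 /c2 /c3 /c4. ring.
Qed.

Lemma coord0 (R : realType) (f : R -> 'cV[R]_4) (i : 'I_4) :
  decays_minus f -> f y i ord0 @[y --> -oo] --> (0:R).
Proof.
move=> Hf; have := continuous_cvg _ (@coord_continuous R 4 1 i ord0 0) Hf.
rewrite mxE; apply; exact: _.
Qed.

Arguments Wf_cst {R nu mu phi lam p q}.
Lemma Wf_lim (R : realType) (p q : R -> 'cV[R]_4) :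
  decays_minus p -> decays_minus q -> Wf p q y @[y --> -oo] --> (0:R).
Proof.
move=> Hp Hq.
have := cvgB (cvgD (cvgM (@coord0 _ _ (inord 0) Hp) (@coord0 _ _ (inord 2) Hq))
                   (cvgM (@coord0 _ _ (inord 1) Hp) (@coord0 _ _ (inord 3) Hq)))
             (cvgD (cvgM (@coord0 _ _ (inord 2) Hp) (@coord0 _ _ (inord 0) Hq))
                   (cvgM (@coord0 _ _ (inord 3) Hp) (@coord0 _ _ (inord 1) Hq))).
rewrite !mulr0 !addr0 subr0 => H; apply: H; exact: _.
Qed.

Lemma vec4_eq (R : realType) (v : 'cV[R]_4) : v = vec4 (c1 v) (c2 v) (c3 v) (c4 v).
Proof.
apply/matrixP => i j; rewrite (ord1 j) mxE.
case: i => [[|[|[|[|k]]]] Hi] //=; rewrite /c1 /c2 /c3 /c4; congr (v _ _);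
  by apply/val_inj; rewrite /= inordK.
Qed.

Arguments vec4_eq {R}.
Theorem lemma3 (R : realType) (nu mu : R) (phi : R -> R) (lam s : R)
  (p q : R -> 'cV[R]_4) :
  H1 nu mu phi -> H2 nu mu ->
  fnl' nu mu 0 < lam ->
  conj_point nu mu phi lam s ->
  is_sol nu mu phi lam p -> decays_minus p ->
  is_sol nu mu phi lam q -> decays_minus q ->
  is_basis2 (Eu nu mu phi lam s) (p s) (q s) ->
  lsand (p s) ->
  exists alpha : R,
    p s = vec4 0 (c2 (p s)) (c3 (p s)) 0 /\
    q s = vec4 (alpha * c2 (p s)) (c2 (q s)) (c3 (q s)) (alpha * c3 (p s)).
Proof.
move=> _ _ _ _ Hp Dp Hq Dq [Hind _] [P1 P4].
have W0 : Wf p q s = 0.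
  have L := @Wf_lim _ _ _ Dp Dq.
  have e : Wf p q = (fun _ => Wf p q s).
    by apply/funext => y; rewrite (Wf_cst Hp Hq y s).
  rewrite e in L; exact: (cvg_unique _ (cvg_cst _) L).
move: W0; rewrite /Wf P1 P4 !mul0r add0r addr0 => W0.
have Pe : p s = vec4 0 (c2 (p s)) (c3 (p s)) 0 by rewrite {1}(vec4_eq (p s)) P1 P4.
set a2 := c2 (p s) in W0 Pe *; set a3 := c3 (p s) in W0 Pe *.
have nz : (a2 != 0) || (a3 != 0).
  rewrite -negb_and; apply/negP => /andP [/eqP h2 /eqP h3].
  have := Hind 1 0; rewrite scale1r scale0r addr0 Pe h2 h3.
  have -> : vec4 0 0 0 0 = (0 : 'cV[R]_4).
    by apply/matrixP => i j; rewrite !mxE; case: i => [[|[|[|[|k]]]] Hi].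
  by case=> // /eqP; rewrite oner_eq0.
have [h2|h2] := eqVneq a2 0.
- rewrite h2 eqxx /= in nz.
  exists (c4 (q s) / a3); split => //.
  rewrite {1}(vec4_eq (q s)) h2 mulr0 divfK //; congr vec4.
  move: W0; rewrite h2 mul0r sub0r => /eqP; rewrite oppr_eq0 mulf_eq0.
  by rewrite (negPf nz) => /eqP.
- exists (c1 (q s) / a2); split => //.
  rewrite {1}(vec4_eq (q s)) divfK //; congr vec4.
  apply: (mulfI h2); rewrite mulrA mulrCA divff // mulr1 mulrC.
  by apply/eqP; rewrite -subr_eq0 mulrC [c1 _ * _]mulrC W0.
Qed.
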